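(* Let $\Sigma$ be a set of prime numbers, $S$ the multiplicative submonoid of $\mathbb{N}$ generated by $\Sigma$, $\mathbb{Z}[S^{-1}]\subset\mathbb{Q}$ the localization, and $\mathbb{A}_{f}=\prod'_{q\in\Sigma}(\mathbb{Q}_q,\mathbb{Z}_q)$. Let $Q$ be a locally compact topological $\mathbb{A}_f$-module and let $C$ be any compact open subgroup of $Q$. Then $Q$ is generated by $C$ as a $\mathbb{Z}[S^{-1}]$-module. In particular, $Q$ is compactly generated over $\mathbb{Z}[S^{-1}]$ and $\sigma$-compact.
   Context: All topological groups are Hausdorff. The restricted product consists of families $(x_q)$ with $x_q\in\mathbb{Q}_q$ and $x_q\in\mathbb{Z}_q$ for almost all $q$, with neighbourhood basis of $0$ the sets $\prod U_q$ with $U_q$ open neighbourhood of $0$ in $\mathbb{Q}_q$ and $U_q=\mathbb{Z}_q$ for almost all $q$; it is a locally compact topological ring containing $\mathbb{Z}[S^{-1}]$ diagonally. A locally compact topological module is a locally compact abelian group with continuous scalar multiplication. *)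

(* Defs.v *)
From HB Require Import structures.
From mathcomp Require Import all_boot all_order all_algebra.
From mathcomp Require Import all_classical all_reals all_analysis.
Set Implicit Arguments. Unset Strict Implicit. Unset Printing Implicit Defensive.
Import Order.TTheory GRing.Theory Num.Theory.
Local Open Scope classical_set_scope.
Local Open Scope ring_scope.

(* q-adic numbers, represented by their digit expansions               *)
(*   x = sum_{k in Z} (x k) q^k,  0 <= x k < q, x k = 0 for k << 0.     *)
(* This representation is canonical (Leibniz equality = equality in Q_q). *)

Definition digits := int -> nat.

Definition isQq (q : nat) (d : digits) : Prop :=
  (forall k, (d k < q)%N) /\ exists m : int, forall k : int, k < m -> d k = 0%N.

Definition isZq (q : nat) (d : digits) : Prop :=
  isQq q d /\ forall k : int, k < 0 -> d k = 0%N.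

(* k-th q-adic digit of a rational r (r in Z_(q)[1/q] = Q, viewed in Q_q):
   r = n / (q^e d') with d' coprime to q; digit k of r is digit (k+e) of
   the q-adic integer n * d'^{-1}, computed modulo q^(k+e+1), d'^{-1} being
   d'^(phi(M)-1) mod M (Euler). *)
Definition qdig (q : nat) (r : rat) (k : int) : nat :=
  let n := numq r in
  let dn := `|denq r|%N in
  let e := logn q dn in
  let d' := (dn %/ q ^ e)%N in
  let j := k + e%:Z in
  if j < 0 then 0%N else
  let jn := `|j|%N in
  let M := (q ^ jn.+1)%N in
  let res := ((n * ((d' ^ (totient M).-1)%N)%:Z) %% M%:Z)%Z in
  `|(res %/ (q ^ jn)%N%:Z)%Z|%N.

Definition psum (q : nat) (d : digits) (N : nat) : rat :=
  \sum_(i < (N + N)%N) ((d (i%:Z - N%:Z))%:R * (q%:R : rat) ^ (i%:Z - N%:Z)).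

Definition evval (u : nat -> nat) : nat :=
  xget 0%N [set v | exists N0, forall N, (N0 <= N)%N -> u N = v].

(* ring operations of Q_q, as limits of the operations on truncations *)
Definition qadd (q : nat) (x y : digits) : digits :=
  fun k => evval (fun N => qdig q (psum q x N + psum q y N) k).
Definition qmul (q : nat) (x y : digits) : digits :=
  fun k => evval (fun N => qdig q (psum q x N * psum q y N) k).

(* open subsets of Q_q (q-adic topology: balls x + q^n Z_q are the sets of
   digit expansions agreeing with x below n) *)
Definition qopen (q : nat) (U : set digits) : Prop :=
  U `<=` isQq q /\
  forall x, U x -> exists n : int, forall y, isQq q y ->
     (forall k : int, k < n -> y k = x k) -> U y.

Definition dzero : digits := fun _ => 0%N.

(* The finite adeles A_f = prod'_{q in Sigma} (Q_q, Z_q), as families   *)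
(* indexed by nat, zero at indices outside Sigma.                       *)

Definition adele := nat -> digits.

Definition inAf (Sigma : set nat) (x : adele) : Prop :=
  (forall q, ~ Sigma q -> x q = dzero) /\
  (forall q, Sigma q -> isQq q (x q)) /\
  finite_set [set q | Sigma q /\ ~ isZq q (x q)].

Definition afadd (Sigma : set nat) (x y : adele) : adele :=
  fun q => if `[< Sigma q >] then qadd q (x q) (y q) else dzero.
Definition afmul (Sigma : set nat) (x y : adele) : adele :=
  fun q => if `[< Sigma q >] then qmul q (x q) (y q) else dzero.

Definition afdiag (Sigma : set nat) (r : rat) : adele :=
  fun q => if `[< Sigma q >] then qdig q r else dzero.

Definition afbasic0 (Sigma : set nat) (V : set adele) : Prop :=
  exists U : nat -> set digits,
    (forall q, Sigma q -> qopen q (U q) /\ U q dzero) /\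
    finite_set [set q | Sigma q /\ U q <> isZq q] /\
    V = [set u | inAf Sigma u /\ forall q, Sigma q -> U q (u q)].

Inductive inS (Sigma : set nat) : nat -> Prop :=
| inS1 : inS Sigma 1
| inSmul p n : Sigma p -> inS Sigma n -> inS Sigma (p * n).

Definition inZSinv (Sigma : set nat) (r : rat) : Prop :=
  exists (a : int) (s : nat), inS Sigma s /\ r = a%:~R / s%:R.

(* act : A_f x Q -> Q is an A_f-module structure on Q, continuous for the
   product topology (A_f carrying the restricted product topology) *)
Definition Af_module (Sigma : set nat) (Q : topologicalZmodType)
    (act : adele -> Q -> Q) : Prop :=
  (forall a b x, inAf Sigma a -> inAf Sigma b ->
      act (afadd Sigma a b) x = act a x + act b x) /\
  (forall a x y, inAf Sigma a -> act a (x + y) = act a x + act a y) /\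
  (forall a b x, inAf Sigma a -> inAf Sigma b ->
      act (afmul Sigma a b) x = act a (act b x)) /\
  (forall x, act (afdiag Sigma 1) x = x) /\
  (forall a x, inAf Sigma a -> forall W, nbhs (act a x) W ->
      exists V, afbasic0 Sigma V /\ exists V', nbhs x V' /\
        forall u y, V u -> V' y -> W (act (afadd Sigma a u) y)).

Definition subgroup (Q : zmodType) (C : set Q) : Prop :=
  C 0 /\ forall x y, C x -> C y -> C (x - y).

Definition in_ZSinv_span (Sigma : set nat) (Q : topologicalZmodType)
    (act : adele -> Q -> Q) (K : set Q) (x : Q) : Prop :=
  exists s : seq (rat * Q),
    (forall p, p \in s -> inZSinv Sigma p.1 /\ K p.2) /\
    x = \sum_(p <- s) act (afdiag Sigma p.1) p.2.

(* Main.v *)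
Require Import Defs.
From HB Require Import structures.
From mathcomp Require Import all_boot all_order all_algebra.
From mathcomp Require Import all_classical all_reals all_analysis.
From mathcomp Require Import cyclic.
From mathcomp Require Import zify ring lra.
Import Order.TTheory GRing.Theory Num.Theory.
Local Open Scope classical_set_scope.
Local Open Scope ring_scope.

Lemma natexp (q c L : nat) :
  (c %% q ^ L = \sum_(0 <= j < L) ((c %% q ^ j.+1) %/ q ^ j) * q ^ j)%N.
Proof.
elim: L => [|L IH]; first by rewrite big_geq // expn0 modn1.
rewrite big_nat_recr //= -IH.
rewrite {1}(divn_eq (c %% q ^ L.+1) (q ^ L)) addnC; congr (_ + _)%N.
by rewrite modn_dvdm // dvdn_exp2l.
Qed.

Lemma lowbound (q : nat) (x : nat -> nat) j : (0 < q)%N -> (forall i, x i < q)%N ->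
  (\sum_(0 <= i < j) x i * q ^ i < q ^ j)%N.
Proof.
move=> q0 xq; elim: j => [|j IH]; first by rewrite big_geq.
rewrite big_nat_recr //= expnS.
have h1 : (x j * q ^ j <= (q.-1) * q ^ j)%N by rewrite leq_mul2r -ltnS prednK ?xq ?orbT.
have h2 : (q.-1 * q ^ j + q ^ j = q * q ^ j)%N.
  by rewrite -{2}(mul1n (q ^ j)%N) -mulnDl addn1 prednK.
rewrite -h2; apply: (@leq_ltn_trans (\sum_(0 <= i < j) x i * q ^ i + q.-1 * q ^ j)%N).
  by rewrite leq_add2l.
by rewrite addnC ltn_add2l.
Qed.

Lemma natdig (q : nat) (x : nat -> nat) L j : (0 < q)%N -> (forall i, x i < q)%N -> (j < L)%N ->
  ((\sum_(0 <= i < L) x i * q ^ i) %% q ^ j.+1 %/ q ^ j = x j)%N.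
Proof.
move=> q0 xq jL.
rewrite (big_cat_nat _ (n := j.+1)) //= big_nat_recr //=.
have hd : (q ^ j.+1 %| \sum_(j.+1 <= i < L) x i * q ^ i)%N.
  rewrite big_nat_cond; apply: dvdn_sum => i /andP[/andP[hi _] _]; apply: dvdn_mull; exact: dvdn_exp2l.
rewrite -modnDmr (eqP hd) addn0 modn_small; last first.
  rewrite expnS.
  have := @lowbound q x j q0 xq.
  have : (x j <= q.-1)%N by rewrite -ltnS prednK ?xq.
  move=> a b.
  have : (\sum_(0 <= i < j) x i * q ^ i + x j * q ^ j < q ^ j + q.-1 * q ^ j)%N.
    by rewrite -addSn leq_add // leq_mul2r a orbT.
  by rewrite -{2}(mul1n (q ^ j)%N) -mulnDl add1n prednK.
by rewrite addnC divnMDl ?expn_gt0 ?q0 // divn_small ?addn0 // (@lowbound q x j q0 xq).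
Qed.

Lemma canon (q : nat) (r : rat) : prime q ->
  let dn := `|denq r|%N in let e := logn q dn in let d' := (dn %/ q ^ e)%N in
  [/\ dn = (q ^ e * d')%N, coprime d' q, (0 < d')%N &
      r * (dn%:R) = (numq r)%:~R].
Proof.
move=> pq dn e d'.
have dn0 : (0 < dn)%N by rewrite /dn absz_gt0 denq_neq0.
have dnE : dn = (q ^ e * d')%N by rewrite mulnC divnK // pfactor_dvdnn.
have d'0 : (0 < d')%N by move: dn0; rewrite dnE muln_gt0 => /andP[].
split => //.
- rewrite coprime_sym prime_coprime //; apply/negP => hq.
  have : (q ^ e.+1 %| dn)%N by rewrite dnE expnSr dvdn_pmul2l // expn_gt0 prime_gt0.
  by rewrite pfactor_dvdn // ltnn.
- rewrite numqE /dn; congr (_ * _); by case: (denq r) (denq_gt0 r).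
Qed.

Lemma inv_spec (a : int) (b M : nat) : coprime b M -> (0 < M)%N ->
  (M%:Z %| ((a * (b ^ (totient M).-1)%N%:Z) %% M%:Z)%Z * b%:Z - a)%Z.
Proof.
move=> cop M0.
rewrite -eqz_mod_dvd.
rewrite modzMml -mulrA -PoszM -expnSr prednK ?totient_gt0 //.
have E : ((b ^ totient M)%N%:Z = 1 %[mod M%:Z])%Z.
  by rewrite !modz_nat Euler_exp_totient.
by rewrite -modzMmr E modzMmr mulr1.
Qed.

Lemma uniq_mod (m x y : int) : 0 <= x < m -> 0 <= y < m -> (m %| x - y)%Z -> x = y.
Proof.
move=> /andP[x0 xm] /andP[y0 ym] /dvdzP[c hc].
have : (c = 0) \/ (c >= 1) \/ (c <= -1) by lia.
case=> [c0|[c1|c1]]; first by move: hc; rewrite c0 mul0r => /eqP; rewrite subr_eq0 => /eqP.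
- have : c * m >= m by nia. lia.
- have : c * m <= - m by nia. lia.
Qed.

Lemma ident1 (rho res n a B D Q : int) : (rho - Q * res) * (B * D) =
  (rho * B - a) * D - Q * B * (res * D - n) - (n * Q * B - a * D).
Proof. ring. Qed.

Lemma RL (q : nat) (r : rat) (a : int) (b E : nat) :
  prime q -> coprime b q -> (0 < b)%N -> r * ((q ^ E * b)%N)%:R = a%:~R ->
  (forall k : int, k + E%:Z < 0 -> qdig q r k = 0%N) /\
  (forall (k : int) (j : nat) (rho : int), k + E%:Z = j%:Z -> 0 <= rho < (q ^ j.+1)%N%:Z ->
     ((q ^ j.+1)%N%:Z %| rho * b%:Z - a)%Z -> qdig q r k = `|(rho %/ (q ^ j)%N%:Z)%Z|%N).
Proof.
move=> pq cbq b0 hr.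
have q0 : (0 < q)%N := prime_gt0 pq.
have [dnE cd' d'0 hn] := canon q r pq.
move: dnE cd' d'0 hn.
rewrite /qdig.
set n := numq r. set dn := `|denq r|%N. set e := logn q dn. set d' := (dn %/ q ^ e)%N.
move=> dnE cd' d'0 hn.
have F3 : n * (q ^ E * b)%N%:Z = a * dn%:Z.
  apply: (@intr_inj rat). rewrite !intrM -!pmulrn -hn -hr.
  by rewrite mulrAC.
have eE : (e <= E)%N.
  have dvd1 : (dn %| `|n| * (q ^ E * b))%N.
    have := congr1 absz F3; rewrite !abszM /= => ->; exact: dvdn_mull.
  have cn : coprime dn `|n| by rewrite coprime_sym /n /dn coprime_num_den.
  rewrite (Gauss_dvdr _ cn) in dvd1.
  have hl : logn q (q ^ E * b) = E.
    rewrite lognM ?expn_gt0 ?q0 // pfactorK // logn_coprime ?addn0 //.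
    by rewrite coprime_sym.
  rewrite -hl /e; apply: dvdn_leq_log => //.
  by rewrite muln_gt0 expn_gt0 q0.
set t := (E - e)%N.
have Et : E = (e + t)%N by rewrite subnKC.
have F4 : n * (q ^ t)%N%:Z * b%:Z = a * d'%:Z.
  apply: (@mulfI _ (q ^ e)%N%:Z); first by rewrite eqz_nat -lt0n expn_gt0 q0.
  transitivity (n * (q ^ E * b)%N%:Z); first by rewrite Et expnD !PoszM; ring.
  by rewrite F3 dnE PoszM; ring.
split.
  move=> k hk; rewrite ifT //. lia.
move=> k j rho hj /andP[rho0 rhoM] hdiv.
have cop : forall m, coprime (q ^ m) (b * d').
  by move=> m; apply: coprimeXl; rewrite coprimeMr ![coprime q _]coprime_sym cbq cd'.
case: ifP => hke.
- have jt : (j.+1 <= t)%N by lia.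
  have h1 : ((q ^ j.+1)%N%:Z %| rho * (b * d')%N%:Z)%Z.
    have -> : rho * (b * d')%N%:Z = (rho * b - a) * d' + n * (q ^ t)%N%:Z * b.
      by rewrite F4 PoszM; ring.
    apply: rpredD; first exact: dvdz_mulr.
    apply: dvdz_mulr; apply: dvdz_mull. by rewrite dvdzE /= dvdn_exp2l.
  rewrite Gauss_dvdzl in h1; last by rewrite coprimezE /=.
  have -> : rho = 0.
    apply: (@uniq_mod (q ^ j.+1)%N%:Z); first by rewrite rho0 rhoM.
      by rewrite lexx /= ltz_nat expn_gt0 q0.
    by rewrite subr0.
  by rewrite div0z.
- set jn := `|(k + e%:Z)%R|%N.
  have hjn : k + e%:Z = jn%:Z by rewrite /jn gez0_abs //; lia.
  have jE : j = (jn + t)%N by lia.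
  set M := (q ^ jn.+1)%N.
  have M0 : (0 < M)%N by rewrite expn_gt0 q0.
  have cM : coprime d' M by rewrite coprime_sym coprimeXl // coprime_sym.
  have hres := @inv_spec n d' M cM M0.
  move: hres.
  set res := ((n * (d' ^ (totient M).-1)%N%:Z) %% M%:Z)%Z => hres.
  have res0 : 0 <= res by rewrite modz_ge0 // eqz_nat -lt0n.
  have resM : res < M%:Z by rewrite ltz_pmod // ltz_nat.
  clearbody res.
  have qjE : (q ^ j.+1 = q ^ t * M)%N by rewrite /M -expnD jE addnC addnS.
  clearbody M jn t d' e dn n.
  have hrho : rho = (q ^ t)%N%:Z * res.
    apply: (@uniq_mod (q ^ j.+1)%N%:Z); first by rewrite rho0 rhoM.
      rewrite qjE PoszM; apply/andP; split; first exact: mulr_ge0.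
      by rewrite ltr_pM2l // ltz_nat expn_gt0 q0.
    rewrite -(Gauss_dvdzl _ (_ : coprimez _ (b * d')%N)); last by rewrite coprimezE /=.
    have -> : (rho - (q ^ t)%N%:Z * res) * (b * d')%N%:Z =
              (rho * b - a) * d' - (q ^ t)%N%:Z * b * (res * d' - n).
      by rewrite PoszM (ident1 _ _ n a) F4 subrr subr0.
    apply: rpredB; first exact: dvdz_mulr.
    rewrite qjE PoszM; apply: dvdz_mul => //; exact: dvdz_mulr.
  rewrite hrho jE expnD PoszM [X in (_ * _ %/ X)%Z]mulrC divzMpl //.
  by rewrite ltz_nat expn_gt0 q0.
Qed.

Lemma psum_eq q d N : (0 < q)%N -> psum q d N =
  (\sum_(0 <= i < N + N) d (i%:Z - N%:Z)%R * q ^ i)%N%:R / (q ^ N)%N%:R.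
Proof.
move=> q0; rewrite /psum natr_sum big_mkord mulr_suml; apply: eq_bigr => i _.
rewrite natrM natrX -mulrA; congr (_ * _).
have qn0 : (q%:R : rat) != 0 by rewrite pnatr_eq0 -lt0n.
rewrite expfzDr // -exprnN natrX. done.
Qed.

Lemma digits_psum q (d : digits) N (k : int) : prime q -> (forall i, (d i < q)%N) ->
  - N%:Z <= k < N%:Z -> qdig q (psum q d N) k = d k.
Proof.
move=> pq hd /andP[k1 k2].
have q0 := prime_gt0 pq.
set c := (\sum_(0 <= i < N + N) d (i%:Z - N%:Z)%R * q ^ i)%N.
have hr : psum q d N * ((q ^ N * 1)%N)%:R = c%:Z%:~R.
  by rewrite psum_eq // muln1 mulfVK // pnatr_eq0 -lt0n expn_gt0 q0.
have [_ H] := RL q (psum q d N) c%:Z 1 N pq (coprime1n q) (ltn0Sn 0) hr.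
set j := absz (k + N%:Z).
have hj : k + N%:Z = j%:Z by rewrite /j gez0_abs //; lia.
rewrite (H k j ((c %% q ^ j.+1)%N%:Z) hj).
- rewrite divz_nat /= /c (@natdig q (fun i => d (i%:Z - N%:Z)%R) (N + N) j q0) //; last by lia.
  congr d; lia.
- by rewrite lez_nat leq0n /= ltz_nat ltn_pmod // expn_gt0 q0.
- by rewrite mulr1 -eqz_mod_dvd -modz_nat modz_mod.
Qed.

Lemma RLc q r : prime q -> let e := logn q `|denq r| in let d' := (`|denq r| %/ q ^ e)%N in
  (0 < d')%N /\ coprime d' q /\
  (forall k : int, k + e%:Z < 0 -> qdig q r k = 0%N) /\
  (forall (k : int) (j : nat) (rho : int), k + e%:Z = j%:Z -> 0 <= rho < (q ^ j.+1)%N%:Z ->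
     ((q ^ j.+1)%N%:Z %| rho * d'%:Z - numq r)%Z -> qdig q r k = `|(rho %/ (q ^ j)%N%:Z)%Z|%N).
Proof.
move=> pq e d'.
have [dnE cd' d'0 hn] := canon q r pq.
have hr : r * ((q ^ e * d')%N)%:R = (numq r)%:~R by rewrite -dnE.
have [H1 H2] := RL q r (numq r) d' e pq cd' d'0 hr.
by [].
Qed.

Lemma inv_ex (a : int) (b M : nat) : coprime b M -> (0 < M)%N ->
  exists rho : int, 0 <= rho < M%:Z /\ (M%:Z %| rho * b%:Z - a)%Z.
Proof.
move=> cop M0.
exists ((a * (b ^ (totient M).-1)%N%:Z) %% M%:Z)%Z; split; last exact: inv_spec.
by rewrite modz_ge0 ?ltz_pmod //; lia.
Qed.

Lemma qdig_lt q r k : prime q -> (qdig q r k < q)%N.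
Proof.
move=> pq; have q0 := prime_gt0 pq.
have [d'0 [cd' [H1 H2]]] := RLc q r pq.
move: d'0 cd' H1 H2.
set e := logn q `|denq r|. set d' := (`|denq r| %/ q ^ e)%N.
move=> d'0 cd' H1 H2.
have [hke|hke] := ltP (k + e%:Z) 0; first by rewrite H1.
set j := absz (k + e%:Z).
have hj : k + e%:Z = j%:Z by rewrite /j gez0_abs.
have cM : coprime d' (q ^ j.+1) by rewrite coprimeXr // coprime_sym.
have M0 : (0 < q ^ j.+1)%N by rewrite expn_gt0 q0.
have [rho [/andP[r0 r1] rd]] := inv_ex (numq r) d' (q ^ j.+1) cM M0.
rewrite (H2 k j rho hj) ?r0 ?r1 //.
have : (rho %/ (q ^ j)%N%:Z < q%:Z)%Z.
  by rewrite ltz_divLR ?ltz_nat ?expn_gt0 ?q0 // -PoszM -expnS.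
have : 0 <= (rho %/ (q ^ j)%N%:Z)%Z by rewrite divz_ge0 // ltz_nat expn_gt0 q0.
lia.
Qed.

Lemma psum_qdig q r N : prime q ->
  let e := logn q `|denq r| in let d' := (`|denq r| %/ q ^ e)%N in (e <= N)%N ->
  exists rho : int, psum q (qdig q r) N * (q ^ e)%N%:R = rho%:~R /\
     ((q ^ (N + e))%N%:Z %| rho * d'%:Z - numq r)%Z.
Proof.
move=> pq e d' eN; have q0 := prime_gt0 pq.
move: (RLc q r pq) => /= [d'0 [cd' [H1 H2]]].
rewrite -/e -/d' in d'0 cd' H1 H2.
clearbody d' e.
have cM : coprime d' (q ^ (N + e)) by rewrite coprimeXr // coprime_sym.
have M0 : (0 < q ^ (N + e))%N by rewrite expn_gt0 q0.
have [rho [/andP[r0 r1] rd]] := inv_ex (numq r) d' _ cM M0.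
exists rho; split => //.
set rn := absz rho.
have rE : rho = rn%:Z by rewrite /rn gez0_abs.
clearbody rn.
have hc : (\sum_(0 <= i < N + N) qdig q r (i%:Z - N%:Z)%R * q ^ i = q ^ (N - e) * rn)%N.
  rewrite (big_cat_nat _ (n := (N - e)%N)) //=; last by lia.
  rewrite big_nat_cond big1 ?add0n; last first.
    move=> i /andP[/andP[_ hi] _]; rewrite H1 ?mul0n //; lia.
  rewrite -{1}(add0n (N - e)%N) big_addn.
  have -> : (N + N - (N - e) = N + e)%N by lia.
  rewrite big_nat_cond.
  rewrite (eq_bigr (fun i => ((rn %% q ^ i.+1) %/ q ^ i) * q ^ i * q ^ (N - e))%N); last first.
    move=> i /andP[/andP[_ hi] _].
    rewrite expnD mulnA; congr (_ * _ * _)%N.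
    rewrite (H2 _ i ((rn %% q ^ i.+1)%N%:Z)); first by rewrite divz_nat.
    - lia.
    - by rewrite lez_nat leq0n /= ltz_nat ltn_pmod // expn_gt0 q0.
    - have -> : (rn %% q ^ i.+1)%N%:Z * d'%:Z - numq r =
                ((rn %% q ^ i.+1)%N%:Z - rho) * d'%:Z + (rho * d'%:Z - numq r).
        by rewrite mulrBl addrA subrK.
      apply: rpredD.
        apply: dvdz_mulr; rewrite rE -eqz_mod_dvd -modz_nat modz_mod //.
      apply: dvdz_trans rd; rewrite dvdzE /= dvdn_exp2l //; lia.
  rewrite -big_nat_cond -(big_distrl (q ^ (N - e))%N) -(natexp q rn (N + e)).
  change (rn %% q ^ (N + e) * q ^ (N - e) = q ^ (N - e) * rn)%N.
  rewrite modn_small; first exact: mulnC.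
  by rewrite -ltz_nat -rE.
rewrite psum_eq // hc natrM rE.
have -> : (q ^ N)%N = (q ^ (N - e) * q ^ e)%N by rewrite -expnD subnK.
have h1 : ((q ^ (N - e))%N%:R : rat) != 0 by rewrite pnatr_eq0 -lt0n expn_gt0 q0.
have h2 : ((q ^ e)%N%:R : rat) != 0 by rewrite pnatr_eq0 -lt0n expn_gt0 q0.
rewrite natrM; field.
by rewrite h1 h2.
Qed.

Lemma ident2 (r1 r2 d1 d2 n1 n2 QE : int) : n1 * n2 = QE * (d1 * d2) ->
  (r1 * r2 - QE) * (d1 * d2) = (r1 * d1 - n1) * (r2 * d2) + n1 * (r2 * d2 - n2).
Proof.
move=> h. rewrite mulrBl -h. ring.
Qed.

Lemma prod_digit q r1 r2 (k : int) N : prime q -> r1 * r2 = 1 ->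
  (logn q `|denq r1| <= N)%N -> (logn q `|denq r2| <= N)%N ->
  k + (logn q `|denq r1| + logn q `|denq r2|)%N%:Z + 1 <= N%:Z ->
  qdig q (psum q (qdig q r1) N * psum q (qdig q r2) N) k = qdig q 1 k.
Proof.
move=> pq h12 e1N e2N hk; have q0 := prime_gt0 pq.
have [dnE1 cd1 d10 hn1] := canon q r1 pq.
have [dnE2 cd2 d20 hn2] := canon q r2 pq.
have [rho1 [hr1 hd1]] := psum_qdig q r1 N pq e1N.
have [rho2 [hr2 hd2]] := psum_qdig q r2 N pq e2N.
move: dnE1 cd1 d10 hn1 dnE2 cd2 d20 hn2 hr1 hd1 hr2 hd2 e1N e2N hk.
set e1 := logn q `|denq r1|. set e2 := logn q `|denq r2|.
set d1 := (`|denq r1| %/ q ^ e1)%N. set d2 := (`|denq r2| %/ q ^ e2)%N.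
set P1 := psum q (qdig q r1) N. set P2 := psum q (qdig q r2) N.
set n1 := numq r1. set n2 := numq r2.
set dn1 := `|denq r1|%N. set dn2 := `|denq r2|%N.
move=> dnE1 cd1 d10 hn1 dnE2 cd2 d20 hn2 hr1 hd1 hr2 hd2 e1N e2N hk.
have hnn : n1 * n2 = (q ^ (e1 + e2))%N%:Z * (d1 * d2)%N%:Z.
  apply: (@intr_inj rat).
  rewrite intrM -hn1 -hn2 -!pmulrn mulrACA h12 mul1r -natrM.
  by rewrite dnE1 dnE2; congr (_%:R); rewrite expnD; ring.
clearbody P1 P2 n1 n2 d1 d2 e1 e2 dn1 dn2.
set E := (e1 + e2)%N.
have hP : P1 * P2 * ((q ^ E * 1)%N)%:R = (rho1 * rho2)%:~R.
  by rewrite muln1 /E expnD natrM mulrACA hr1 hr2 intrM.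
have [HP1 HP2] := RL q (P1 * P2) (rho1 * rho2) 1 E pq (coprime1n q) (ltn0Sn 0) hP.
have h1 : 1 * ((q ^ 0 * 1)%N)%:R = (1%:Z)%:~R :> rat by rewrite expn0 mul1r.
have [H11 H12] := RL q 1 1 1 0 pq (coprime1n q) (ltn0Sn 0) h1.
have cN : coprimez (q ^ N)%N%:Z (d1 * d2)%N%:Z.
  by rewrite coprimezE /= coprimeXl // coprimeMr ![coprime q _]coprime_sym cd1 cd2.
have D : ((q ^ N)%N%:Z %| rho1 * rho2 - (q ^ E)%N%:Z)%Z.
  rewrite PoszM in hnn cN; rewrite -(Gauss_dvdzl _ cN) (ident2 _ _ _ _ _ _ _ hnn).
  apply: rpredD.
    apply: dvdz_mulr; apply: dvdz_trans hd1; rewrite dvdzE /= dvdn_exp2l //; lia.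
  apply: dvdz_mull; apply: dvdz_trans hd2; rewrite dvdzE /= dvdn_exp2l //; lia.
have [kneg|kpos] := ltP k 0.
  rewrite H11 ?addr0 //.
  have [hkE|hkE] := ltP (k + E%:Z) 0; first by rewrite HP1.
  set j := absz (k + E%:Z).
  have hj : k + E%:Z = j%:Z by rewrite /j gez0_abs.
  rewrite (HP2 k j 0 hj); first by rewrite div0z.
    by rewrite lexx /= ltz_nat expn_gt0 q0.
  have -> : 0 * 1 - rho1 * rho2 = - (rho1 * rho2 - (q ^ E)%N%:Z) - (q ^ E)%N%:Z.
    by rewrite mul0r sub0r opprB addrAC subrr add0r.
  apply: rpredB; last by rewrite dvdzE /= dvdn_exp2l //; lia.
  rewrite rpredN; apply: dvdz_trans D.
  by rewrite dvdzE /= dvdn_exp2l //; lia.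
set j := absz (k + E%:Z).
have hj : k + E%:Z = j%:Z by rewrite /j gez0_abs //; lia.
set i := absz k.
have hi : k + 0%N%:Z = i%:Z by rewrite addr0 /i gez0_abs.
rewrite (HP2 k j (q ^ E)%N%:Z hj); first last.
- rewrite mulr1 -opprB rpredN; apply: dvdz_trans D.
  by rewrite dvdzE /= dvdn_exp2l //; lia.
- rewrite lez_nat leq0n /= ltz_nat ltn_exp2l ?prime_gt1 //; lia.
rewrite (H12 k i 1 hi); first last.
- by rewrite mulr1 subrr dvdz0.
- by rewrite ler01 /= ltz_nat -(expn0 q) ltn_exp2l ?prime_gt1.
have -> : j = (E + i)%N by lia.
rewrite expnD PoszM.
have -> : (q ^ E)%N%:Z = (q ^ E)%N%:Z * 1 by rewrite mulr1.
by rewrite -mulrA mul1r divzMpl // ltz_nat expn_gt0 q0.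
Qed.

Lemma qdig_nat_low q (s m : nat) (k : int) : prime q -> (q ^ m %| s)%N -> k < m%:Z ->
  qdig q s%:R k = 0%N.
Proof.
move=> pq hs hk; have q0 := prime_gt0 pq.
have hr : (s%:R : rat) * ((q ^ 0 * 1)%N)%:R = (s%:Z)%:~R by rewrite expn0 mulr1.
have [H1 H2] := RL q s%:R s%:Z 1 0 pq (coprime1n q) (ltn0Sn 0) hr.
have [hk0|hk0] := ltP k 0; first by apply: H1; rewrite addr0.
set j := absz k.
have hj : k + 0%N%:Z = j%:Z by rewrite addr0 /j gez0_abs.
rewrite (H2 k j 0 hj) ?div0z //.
  by rewrite lexx /= ltz_nat expn_gt0 q0.
rewrite mul0r sub0r rpredN dvdzE /=.
apply: dvdn_trans hs; rewrite dvdn_exp2l //; lia.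
Qed.

Lemma qdig0 q k : prime q -> qdig q 0 k = 0%N.
Proof.
move=> pq; have := @qdig_nat_low q 0 (absz k).+1 k pq (dvdn0 _).
rewrite (_ : (0%:R : rat) = 0) //; apply; lia.
Qed.

Lemma qdig_isQq q r : prime q -> isQq q (qdig q r).
Proof.
move=> pq; split; first by move=> k; exact: qdig_lt.
move: (RLc q r pq) => /= [_ [_ [H1 _]]].
exists (- (logn q `|denq r|)%:Z) => k hk; apply: H1; lia.
Qed.

Lemma qdig_isZq q r : prime q -> ~~ (q %| `|denq r|)%N -> isZq q (qdig q r).
Proof.
move=> pq hd; split; first exact: qdig_isQq.
move: (RLc q r pq) => /= [_ [_ [H1 _]]].
have he : logn q `|denq r| = 0%N by apply: logn_coprime; rewrite prime_coprime.
move=> k hk; apply: H1; rewrite he; lia.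
Qed.

Lemma inAf_diag (Sigma : set nat) (Hprime : forall q, Sigma q -> prime q) r :
  inAf Sigma (afdiag Sigma r).
Proof.
split; [|split].
- by move=> q hq; rewrite /afdiag asboolF.
- by move=> q hq; rewrite /afdiag asboolT //; apply: qdig_isQq; apply: Hprime.
- apply: (@sub_finite_set _ _ `I_(`|denq r|.+1)) => //.
  move=> q [hq hZ]; rewrite /= ltnS.
  move: hZ; rewrite /afdiag asboolT // => hZ.
  have pq := Hprime q hq.
  have : (q %| `|denq r|)%N.
    apply/negP => hn; apply: hZ; apply: qdig_isZq => //; exact/negP.
  by apply: dvdn_leq; rewrite absz_gt0 denq_neq0.
Qed.

Lemma psum_dzero q N : psum q dzero N = 0.
Proof. by rewrite /psum big1 // => i _; rewrite /dzero mul0r. Qed.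

Lemma evval_eq (u : nat -> nat) v : (exists N0, forall N, (N0 <= N)%N -> u N = v) -> evval u = v.
Proof.
move=> hex; rewrite /evval.
have := @xgetPex nat 0%N [set v | exists N0, forall N, (N0 <= N)%N -> u N = v] (ex_intro _ v hex).
set w := xget _ _ => -[N1 h1].
have [N0 h0] := hex.
by rewrite -(h1 (maxn N0 N1)) ?leq_maxr // h0 // leq_maxl.
Qed.

Lemma qadd0 q (x : digits) : prime q -> (forall k, (x k < q)%N) ->
  qadd q dzero x = x /\ qadd q x dzero = x.
Proof.
move=> pq hx; split; apply/funext => k; rewrite /qadd; apply: evval_eq;
  exists (absz k).+1 => N hN; rewrite psum_dzero ?add0r ?addr0 digits_psum //; lia.
Qed.

Lemma afdiag0 (Sigma : set nat) (Hprime : forall q, Sigma q -> prime q) :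
  afdiag Sigma 0 = fun _ => dzero.
Proof.
apply/funext => q; rewrite /afdiag; case: ifP => // /asboolP hq.
apply/funext => k; exact: (qdig0 q k (Hprime q hq)).
Qed.

Lemma afadd0 (Sigma : set nat) (Hprime : forall q, Sigma q -> prime q) a : inAf Sigma a ->
  afadd Sigma (afdiag Sigma 0) a = a /\ afadd Sigma a (afdiag Sigma 0) = a.
Proof.
move=> [ha1 [ha2 _]]; rewrite afdiag0 //.
split; apply/funext => q; rewrite /afadd; (have [hq|hq] := pselect (Sigma q));
  [rewrite asboolT // | by rewrite asboolF // ha1 | rewrite asboolT // | by rewrite asboolF // ha1].
- by have [h _] := qadd0 q (a q) (Hprime q hq) (ha2 q hq).1.
- by have [_ h] := qadd0 q (a q) (Hprime q hq) (ha2 q hq).1.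
Qed.

Lemma afmul_inv (Sigma : set nat) (Hprime : forall q, Sigma q -> prime q) r1 r2 :
  r1 * r2 = 1 -> afmul Sigma (afdiag Sigma r1) (afdiag Sigma r2) = afdiag Sigma 1.
Proof.
move=> h12; apply/funext => q; rewrite /afmul /afdiag.
have [hq|hq] := pselect (Sigma q); last by rewrite asboolF.
rewrite asboolT //; apply/funext => k; rewrite /qmul; apply: evval_eq.
exists (logn q `|denq r1| + logn q `|denq r2| + absz k + 1)%N => N hN.
apply: prod_digit => //; [exact: Hprime | lia | lia | lia].
Qed.

Lemma inS_mul Sigma a b : inS Sigma a -> inS Sigma b -> inS Sigma (a * b)%N.
Proof.
move=> Ha Hb; elim: Ha => [|p n hp hn IH]; first by rewrite mul1n.
by rewrite -mulnA; apply: inSmul.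
Qed.

Lemma inS_exp Sigma p m : Sigma p -> inS Sigma (p ^ m)%N.
Proof.
move=> hp; elim: m => [|m IH]; first exact: inS1.
by rewrite expnS; apply: inSmul.
Qed.

Lemma prod_props (Sigma : set nat) (Hprime : forall q, Sigma q -> prime q) (l : seq nat) (f : nat -> nat) :
  (forall q, q \in l -> Sigma q) ->
  inS Sigma (\prod_(q <- l) q ^ f q)%N /\ (0 < \prod_(q <- l) q ^ f q)%N /\
  (forall q, q \in l -> (q ^ f q %| \prod_(q <- l) q ^ f q)%N).
Proof.
elim: l => [|a l IH] hl; first by rewrite big_nil; split; [exact: inS1 | split].
have ha : Sigma a by apply: hl; rewrite inE eqxx.
have hl' : forall q, q \in l -> Sigma q by move=> q hq; apply: hl; rewrite inE hq orbT.
have [h1 [h2 h3]] := IH hl'.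
rewrite big_cons; split; [|split].
- by apply: inS_mul => //; exact: inS_exp.
- by rewrite muln_gt0 h2 expn_gt0 prime_gt0 // Hprime.
- move=> q; rewrite inE => /orP[/eqP ->|hq]; first exact: dvdn_mulr.
  by apply: dvdn_mull; apply: h3.
Qed.

Lemma act_cont (Sigma : set nat) (Hprime : forall q, Sigma q -> prime q)
  (Q : topologicalZmodType) (act : adele -> Q -> Q) (Hmod : Af_module Sigma act) a :
  inAf Sigma a -> continuous (act a).
Proof.
move: Hmod => [_ [_ [_ [_ Hcont]]]] ha y.
move=> W /= hW.
have [V [hV [V' [hV' H]]]] := Hcont a y ha W hW.
have hZ : V (afdiag Sigma 0).
  move: hV => [U [HU [_ ->]]]; split; first exact: inAf_diag.
  by move=> q hq; rewrite (afdiag0 Sigma Hprime); exact: (HU q hq).2.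
apply: (filterS _ hV') => y' hy'.
by have := H _ _ hZ hy'; rewrite (afadd0 Sigma Hprime a ha).2.
Qed.

Lemma main1 (Sigma : set nat) (Hprime : forall q, Sigma q -> prime q)
  (Q : topologicalZmodType) (act : adele -> Q -> Q) (Hmod : Af_module Sigma act)
  (C : set Q) (HCo : open C) (HCs : subgroup C) x :
  exists s : nat, (0 < s)%N /\ inS Sigma s /\ C (act (afdiag Sigma s%:R) x).
Proof.
move: (Hmod) => [Hadd [_ [_ [_ Hcont]]]].
set Z := afdiag Sigma 0.
have hZ : inAf Sigma Z := inAf_diag Sigma Hprime 0.
have actZ : act Z x = 0.
  have := Hadd Z Z x hZ hZ; rewrite (afadd0 Sigma Hprime Z hZ).1 => h.
  have h' := congr1 (fun z => z - act Z x) h.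
  by rewrite /= subrr addrK in h'; rewrite -h'.
have hC : nbhs (act Z x) C.
  by rewrite actZ; apply: open_nbhs_nbhs; split => //; exact: HCs.1.
have [V [[U [HU [Hfin HV]]] [V' [hV' H]]]] := Hcont Z x hZ C hC.
have : forall q, exists n : int, Sigma q -> forall y, isQq q y ->
    (forall k, k < n -> y k = dzero k) -> U q y.
  move=> q; have [hq|hq] := pselect (Sigma q); last by exists 0.
  have [[_ Ho] U0] := HU q hq; have [n hn] := Ho dzero U0.
  by exists n.
move=> /choice [nf Hnf].
set F := [set q | Sigma q /\ U q <> isZq q].
have [l hl] := (finite_seqP F).1 Hfin.
have hlS : forall q, q \in l -> Sigma q.
  move=> q hq; have : F q by rewrite hl.
  by case.
have [sS [s0 sdiv]] := prod_props Sigma Hprime l (fun q => absz (nf q)) hlS.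
set s := (\prod_(q <- l) q ^ (absz (nf q)))%N.
exists s; split => //; split => //.
set u := afdiag Sigma s%:R.
have hu : V u.
  rewrite HV; split; first exact: inAf_diag.
  move=> q hq; rewrite /u /afdiag asboolT //.
  have pq := Hprime q hq.
  have [hF|hF] := pselect (F q).
  - have ql : q \in l by have : [set` l] q by rewrite -hl.
    apply: (Hnf q hq); first exact: qdig_isQq.
    move=> k hk; rewrite /dzero.
    apply: (qdig_nat_low q s (absz (nf q)) k pq (sdiv q ql)); lia.
  - have hUq : U q = isZq q by apply: contrapT => hne; apply: hF; split.
    rewrite hUq; split; first exact: qdig_isQq.
    move=> k hk; apply: (qdig_nat_low q s 0 k pq); [by rewrite expn0 dvd1n | lia].
have := H u x hu (nbhs_singleton hV').
by rewrite (afadd0 Sigma Hprime u (inAf_diag Sigma Hprime _)).1.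
Qed.

Theorem mainTheorem13 (Sigma : set nat) (Hprime : forall q, Sigma q -> prime q)
  (Q : topologicalZmodType) (act : adele -> Q -> Q)
  (HQ : hausdorff_space Q) (HQlc : locally_compact [set: Q])
  (Hmod : Af_module Sigma act)
  (C : set Q) (HCc : compact C) (HCo : open C) (HCs : subgroup C) :
  (forall x : Q, in_ZSinv_span Sigma act C x) /\
  (exists K : set Q, compact K /\ forall x : Q, in_ZSinv_span Sigma act K x) /\
  (exists K : nat -> set Q, (forall n, compact (K n)) /\ \bigcup_n K n = setT).
Proof.
have Hone := Hmod.2.2.2.1.
have Hmul := Hmod.2.2.1.
have key : forall x, exists s : nat, (0 < s)%N /\ inS Sigma s /\
    exists c, C c /\ x = act (afdiag Sigma (s%:R)^-1) c.
  move=> x; have [s [s0 [sS hc]]] := main1 Sigma Hprime Q act Hmod C HCo HCs x.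
  exists s; split => //; split => //; exists (act (afdiag Sigma s%:R) x); split => //.
  rewrite -Hmul ?afmul_inv ?Hone //; try exact: inAf_diag.
  by rewrite mulVf // pnatr_eq0 -lt0n.
have P1 : forall x, in_ZSinv_span Sigma act C x.
  move=> x; have [s [s0 [sS [c [hc ->]]]]] := key x.
  exists [:: ((s%:R)^-1, c)]; split.
    move=> p; rewrite inE => /eqP -> /=; split => //.
    by exists 1, s; split => //; rewrite /= mul1r.
  by rewrite big_cons big_nil addr0.
split => //; split; first by exists C.
exists (fun n : nat => act (afdiag Sigma (n%:R)^-1) @` C); split.
  move=> n; apply: continuous_compact => //; apply: continuous_subspaceT.
  by apply: (act_cont Sigma Hprime Q act Hmod); exact: inAf_diag.
apply/seteqP; split => // x _.
have [s [_ [_ [c [hc ->]]]]] := key x.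
by exists s => //; exists c.
Qed.
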